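(* In the setting below, $$\left|\sum_{i=1}^{mn}\mathbb{E}(z_i)-m\right|\le 300\sqrt m.$$
   Context: Setting: $m,n$ are positive integers with $n\ge 1200\sqrt m$. A deck of $mn$ cards with $m$ copies of each label $1,\dots,n$ is shuffled uniformly at random. A fixed guessing strategy is used: in round $t=1,\dots,mn$ the Guesser guesses $g_t\in\{1,\dots,n\}$, a function (possibly randomized independently of the deck) of $y_1,\dots,y_{t-1}$, where $y_t\in\{0,1\}$ is the indicator that the $t$-th card has label $g_t$. For a vector $v$, $v_{\le t}:=(v_1,\dots,v_t)$. For $1\le k\le n$, $1\le t\le mn+1$: $a(k,t):=|\{1\le i<t: g_i=k\}|$. Let $Y:=\lfloor \tfrac16\sqrt m\, n\rfloor$. Let $(z_1,\dots,z_{mn})\in\{0,1\}^{mn}$ be a random vector (on an extension of the probability space), with $c(k,t):=|\{1\le i<t: g_i=k,\ z_i=1\}|$, satisfying almost surely: (a) for all $k,t$: $m-\max\{mn-a(k,t)-Y,0\}\le c(k,t)\le m$; (b) for each $t$, conditioned on $g_{\le t},y_{\le t}$, the coordinates of $z_{\le t}$ are mutually independent and independent from $g_{\le mn},y_{\le mn}$; (c) for each $t$, if $a(g_t,t)<mn-Y$ then $\mathbb{E}(z_t\mid g_{\le t},z_{\le t-1})=\frac{m-c(g_t,t)}{mn-a(g_t,t)-Y}$; (d) for each $t$, if $\mathbb{E}(y_t\mid g_{\le t},y_{\le t-1})\le\mathbb{E}(z_t\mid g_{\le t},z_{\le t-1})$ then $y_t\le z_t$. (Such a vector exists.) *)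

(* Defs.v *)
From mathcomp Require Import all_boot all_order all_algebra.
From mathcomp Require Import reals.
Set Implicit Arguments. Unset Strict Implicit. Unset Printing Implicit Defensive.
Import Order.TTheory GRing.Theory Num.Theory.
Local Open Scope ring_scope.

Section Defs.
Variables (R : realType) (Omega : finType) (P : Omega -> R).

Definition is_prob_space : Prop :=
  (forall w, 0 <= P w) /\ \sum_(w : Omega) P w = 1.

Definition Prob (A : pred Omega) : R := \sum_(w | A w) P w.

Definition Expect (X : Omega -> R) : R := \sum_(w : Omega) P w * X w.

(* Conditional expectation E(X | W) evaluated at the outcome w
   (meaningful when P(W = W w) > 0, which holds whenever P w > 0). *)
Definition condE (T : eqType) (X : Omega -> R) (W : Omega -> T) (w : Omega) : R :=
  (\sum_(v | W v == W w) P v * X v) / Prob (fun v => W v == W w).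

Definition condP (T : eqType) (A : pred Omega) (W : Omega -> T) (w : Omega) : R :=
  Prob (fun v => A v && (W v == W w)) / Prob (fun v => W v == W w).
End Defs.

(* v_{<= t} in the paper's 1-indexed notation: the first t coordinates
   (rounds are indexed 0 .. N-1 here, so upto X t = (X_0, ..., X_{t-1})). *)
Definition upto (Omega : Type) (T : Type) (N : nat) (X : 'I_N -> Omega -> T)
  (t : nat) (w : Omega) : seq T :=
  [seq X i w | i <- filter (fun i : 'I_N => (i < t)%N) (enum 'I_N)].

Definition acount (Omega : Type) (n N : nat) (g : 'I_N -> Omega -> 'I_n)
  (k : 'I_n) (t : nat) (w : Omega) : nat :=
  #|[pred i : 'I_N | (i < t)%N && (g i w == k)]|.

Definition ccount (Omega : Type) (n N : nat) (g : 'I_N -> Omega -> 'I_n)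
  (z : 'I_N -> Omega -> bool) (k : 'I_n) (t : nat) (w : Omega) : nat :=
  #|[pred i : 'I_N | [&& (i < t)%N, g i w == k & z i w]]|.

Definition arrangements (m n : nat) : {set (m * n).-tuple 'I_n} :=
  [set s : (m * n).-tuple 'I_n | [forall k : 'I_n, count_mem k s == m]].

Definition Yval (R : realType) (m n : nat) : int :=
  Num.floor (Num.sqrt (m%:R : R) * n%:R / 6).

(* Main.v *)
Require Import Defs.
From mathcomp Require Import all_boot all_order all_algebra.
From mathcomp Require Import reals.
From mathcomp Require Import zify ring lra.
Import Order.TTheory GRing.Theory Num.Theory.
Local Open Scope ring_scope.
Set Implicit Arguments. Unset Strict Implicit. Unset Printing Implicit Defensive.
Section Expect.
Variables (R : realType) (Omega : finType) (P : Omega -> R).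
Hypothesis hP0 : forall w, 0 <= P w.
Hypothesis hP1 : \sum_w P w = 1.

Lemma ExpectD f g : Expect P (fun w => f w + g w) = Expect P f + Expect P g.
Proof. by rewrite /Expect -big_split /=; apply: eq_bigr => w _; rewrite mulrDr. Qed.
Lemma ExpectB f g : Expect P (fun w => f w - g w) = Expect P f - Expect P g.
Proof. by rewrite /Expect -sumrB /=; apply: eq_bigr => w _; rewrite mulrBr. Qed.
Lemma ExpectZ c f : Expect P (fun w => c * f w) = c * Expect P f.
Proof. by rewrite /Expect mulr_sumr; apply: eq_bigr => w _; rewrite mulrCA. Qed.
Lemma Expect_cst c : Expect P (fun _ => c) = c.
Proof. by rewrite /Expect -mulr_suml hP1 mul1r. Qed.
Lemma Expect_sum (I : finType) (F : I -> Omega -> R) :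
  Expect P (fun w => \sum_i F i w) = \sum_i Expect P (F i).
Proof.
rewrite /Expect exchange_big /=; apply: eq_bigr => w _; by rewrite mulr_sumr.
Qed.
Lemma Expect_le f g : (forall w, 0 < P w -> f w <= g w) -> Expect P f <= Expect P g.
Proof.
move=> H; rewrite /Expect; apply: ler_sum => w _.
have := hP0 w; rewrite le0r => /orP [/eqP ->|/H Hw]; first by rewrite !mul0r.
by apply: ler_wpM2l => //; apply: hP0.
Qed.
Lemma Expect_ext f g : (forall w, 0 < P w -> f w = g w) -> Expect P f = Expect P g.
Proof. by move=> H; apply/eqP; rewrite eq_le !Expect_le // => w /H ->. Qed.
Lemma Expect_abs f : `|Expect P f| <= Expect P (fun w => `|f w|).
Proof.
rewrite /Expect; apply: le_trans (ler_norm_sum _ _ _) _.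
by apply: ler_sum => w _; rewrite normrM ger0_norm.
Qed.

Lemma tower (T : eqType) (K : Omega -> T) (X f : Omega -> R) :
  (forall v w, K v = K w -> f v = f w) ->
  Expect P (fun w => X w * f w) = Expect P (fun w => condE P X K w * f w).
Proof.
move=> hf; rewrite /Expect /condE.
pose Pr v := Prob P (fun u => K u == K v).
have PrE v : Pr v = \sum_(u | K u == K v) P u by [].
have Prv v w : K v = K w -> Pr v = Pr w by move=> e; rewrite /Pr e.
have Pv v : Pr v = 0 -> P v = 0.
  move=> h; apply/eqP; rewrite eq_le hP0 andbT -h PrE (bigD1 v) //=.
  by rewrite lerDl sumr_ge0.
transitivity (\sum_w \sum_v (if K v == K w then (P v * X v) * (P w * f w / Pr w) else 0)).
  2: { apply: eq_bigr => w _; rewrite -big_mkcond /= -mulr_suml -/(Pr w); ring. }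
rewrite exchange_big /=; apply: eq_bigr => v _.
rewrite -big_mkcond /=.
transitivity (\sum_(w | K v == K w) P v * X v * (P w * f v / Pr v)).
  2: by apply: eq_bigr => w /eqP e; rewrite (hf w v (esym e)) (Prv w v (esym e)).
rewrite -mulr_sumr -mulr_suml (eq_bigl (fun w => K w == K v)); last by move=> w; rewrite eq_sym.
rewrite -mulr_suml -PrE.
have [h0|hn0] := eqVneq (Pr v) 0.
  by rewrite (Pv v h0) !mul0r.
by field.
Qed.
End Expect.

Lemma amgm (R : realFieldType) (s x y : R) : 0 < s -> `|x * y| <= x ^+ 2 / (2 * s) + s * y ^+ 2 / 2.
Proof.
move=> s0; rewrite normrM -(real_normK (num_real x)) -(real_normK (num_real y)).
set X := `|x|; set Y := `|y|.
have h : X ^+ 2 / (2 * s) + s * Y ^+ 2 / 2 - X * Y = (X - s * Y) ^+ 2 / (2 * s).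
  by field; rewrite gt_eqF.
have : 0 <= (X - s * Y) ^+ 2 / (2 * s) by rewrite divr_ge0 ?sqr_ge0 // mulr_ge0 // ltW.
lra.
Qed.

Lemma amgm1 (R : realFieldType) (s x : R) : 0 < s -> `|x| <= x ^+ 2 / (2 * s) + s / 2.
Proof. move=> s0; have := amgm x 1 s0; by rewrite mulr1 expr1n mulr1. Qed.

Lemma divle (R : realFieldType) (q d x X Dl : R) :
  0 < Dl -> Dl <= d -> 0 <= q -> q * d = x -> x <= X -> q * Dl <= X.
Proof. move=> h1 h2 h3 h4 h5; rewrite -h4 in h5; apply: le_trans h5; exact: ler_wpM2l. Qed.

Section Main.
Variables (R : realType) (m n : nat) (Omega : finType) (P : Omega -> R).
Hypothesis hP0 : forall w, 0 <= P w.
Hypothesis hP1 : \sum_w P w = 1.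
Local Notation N := (m * n)%N.
Variables (g : 'I_N -> Omega -> 'I_n) (z : 'I_N -> Omega -> bool) (Yn : nat).
Hypothesis hYn : (Yn <= N)%N.
Definition Nn := (N - Yn)%N.
Hypothesis ha : forall k t w, (t <= N)%N -> 0 < P w ->
  (m <= ccount g z k t w + (Nn - acount g k t w))%N /\ (ccount g z k t w <= m)%N.
Definition key (t : 'I_N) w := (upto g t.+1 w, upto z t w).
Hypothesis hc : forall (t : 'I_N) w, 0 < P w -> (acount g (g t w) t w < Nn)%N ->
  condE P (fun v => (z t v)%:R) (key t) w
  = (m%:R - (ccount g z (g t w) t w)%:R) / (Nn%:R - (acount g (g t w) t w)%:R).

Lemma card_rec (p : pred 'I_N) (t : 'I_N) :
  #|[pred i : 'I_N | (i < t.+1)%N && p i]| = (#|[pred i : 'I_N | (i < t)%N && p i]| + p t)%N.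
Proof.
rewrite (cardD1 t) inE ltnSn /= addnC; congr (_ + _)%N; apply: eq_card => i.
rewrite !inE ltnS leq_eqVlt; case: (eqVneq i t) => [->|ne] /=; first by rewrite ltnn.
by move: ne; rewrite -val_eqE => /negbTE ->.
Qed.

Lemma card_le (p q : pred 'I_N) : (forall i, p i -> q i) -> (#|p| <= #|q|)%N.
Proof. by move=> H; apply: subset_leq_card; apply/subsetP => i; rewrite !unfold_in => /H. Qed.

Definition cntL L k t w := #|[pred i : 'I_N | [&& (i < t)%N, g i w == k & (acount g k i w < L)%N]]|.
Definition redL L k t w :=
  #|[pred i : 'I_N | [&& (i < t)%N, g i w == k & ((acount g k i w < L)%N && z i w)]]|.

Lemma acount_rec k (t : 'I_N) w : acount g k t.+1 w = (acount g k t w + (g t w == k))%N.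
Proof. exact: (card_rec (fun i => g i w == k)). Qed.
Lemma ccount_rec k (t : 'I_N) w : ccount g z k t.+1 w = (ccount g z k t w + ((g t w == k) && z t w))%N.
Proof. exact: (card_rec (fun i => (g i w == k) && z i w)). Qed.
Lemma cntL_rec L k (t : 'I_N) w :
  cntL L k t.+1 w = (cntL L k t w + ((g t w == k) && (acount g k t w < L)%N))%N.
Proof. exact: (card_rec (fun i => (g i w == k) && (acount g k i w < L)%N)). Qed.
Lemma redL_rec L k (t : 'I_N) w :
  redL L k t.+1 w = (redL L k t w + [&& g t w == k, (acount g k t w < L)%N & z t w])%N.
Proof. exact: (card_rec (fun i => [&& g i w == k, (acount g k i w < L)%N & z i w])). Qed.

Lemma acount_mono k s t w : (s <= t)%N -> (acount g k s w <= acount g k t w)%N.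
Proof. move=> st; apply: card_le => i /= /andP [it ->]; by rewrite (leq_trans it st). Qed.

Lemma acount_lt k (i : 'I_N) t w : (i < t)%N -> g i w = k -> (acount g k i w < acount g k t w)%N.
Proof.
move=> it gi; apply: (leq_trans _ (acount_mono k w it)).
by rewrite acount_rec gi eqxx addn1.
Qed.

Lemma cnt_eq L k t w : (acount g k t w < L)%N ->
  cntL L k t w = acount g k t w /\ redL L k t w = ccount g z k t w.
Proof.
move=> h; split; apply: eq_card => i; rewrite !inE.
  case: (ltnP i t) => //= it; case: eqP => //= gi.
  by rewrite (leq_ltn_trans (acount_mono k w (ltnW it)) h).
case: (ltnP i t) => //= it; case: eqP => //= gi.
by rewrite (leq_ltn_trans (acount_mono k w (ltnW it)) h).
Qed.

Lemma upto_eq (T : Type) (X : 'I_N -> Omega -> T) t v w :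
  upto X t v = upto X t w -> forall i : 'I_N, (i < t)%N -> X i v = X i w.
Proof.
rewrite /upto => /eq_in_map H i it; apply: H; by rewrite mem_filter it mem_enum.
Qed.

Lemma key_eq (t : 'I_N) v w : key t v = key t w ->
  g t v = g t w /\ (forall i : 'I_N, (i < t)%N -> g i v = g i w /\ z i v = z i w).
Proof.
case=> /upto_eq Hg /upto_eq Hz; split; first exact: Hg.
by move=> i it; split; [apply: Hg; rewrite ltnS ltnW|apply: Hz].
Qed.

Lemma key_counts (t : 'I_N) v w : key t v = key t w ->
  g t v = g t w /\ forall k L, [/\ acount g k t v = acount g k t w,
     ccount g z k t v = ccount g z k t w, cntL L k t v = cntL L k t w &
     redL L k t v = redL L k t w].
Proof.
move=> /key_eq [gt H]; split => // k L.
have ac : forall s, (s <= t)%N -> acount g k s v = acount g k s w.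
  move=> s st; apply: eq_card => i; rewrite !inE; case: (ltnP i s) => //= is_.
  by rewrite (H i (leq_trans is_ st)).1.
split; first exact: ac.
- apply: eq_card => i; rewrite !inE; case: (ltnP i t) => //= it.
  by case: (H i it) => -> ->.
- apply: eq_card => i; rewrite !inE; case: (ltnP i t) => //= it.
  by rewrite (H i it).1 ac // ltnW.
- apply: eq_card => i; rewrite !inE; case: (ltnP i t) => //= it.
  by case: (H i it) => -> ->; rewrite ac // ltnW.
Qed.

Lemma z_exh (t : 'I_N) w : 0 < P w -> (Nn <= acount g (g t w) t w)%N -> z t w = false.
Proof.
move=> Pw h.
have [h1 _] := @ha (g t w) t w (ltnW (ltn_ord t)) Pw.
have [_ h2] := @ha (g t w) t.+1 w (ltn_ord t) Pw.
rewrite ccount_rec eqxx /= in h2.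
case: (z t w) h2 => //=; lia.
Qed.

Definition qreg (t : 'I_N) w : R :=
  if (acount g (g t w) t w < Nn)%N then
    (m%:R - (ccount g z (g t w) t w)%:R) / (Nn%:R - (acount g (g t w) t w)%:R)
  else 0.

Definition meas (t : 'I_N) (f : Omega -> R) := forall v w, key t v = key t w -> f v = f w.

Lemma zstep (t : 'I_N) f : meas t f ->
  Expect P (fun w => (z t w)%:R * f w) = Expect P (fun w => qreg t w * f w).
Proof.
move=> mf.
pose r w := (acount g (g t w) t w < Nn)%N.
have mr : meas t (fun w => (r w)%:R * f w).
  move=> v w e; rewrite (mf _ _ e) /r; have [gt H] := key_counts e.
  by rewrite gt; case: (H (g t w) 0%N) => ->.
transitivity (Expect P (fun w => (z t w)%:R * ((r w)%:R * f w))).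
  apply: (Expect_ext hP0) => w Pw; rewrite /r; case: ltnP => h; first by rewrite mul1r.
  by rewrite z_exh // !mul0r.
rewrite (tower hP0 (fun w => (z t w)%:R) mr); apply: (Expect_ext hP0) => w Pw; rewrite /qreg /r.
case: ltnP => h; last by rewrite !mul0r mulr0.
by rewrite hc // mul1r.
Qed.

Lemma step_exp (t : 'I_N) (phi : 'I_n -> nat -> Omega -> R) (phi0 phi1 : Omega -> R) :
  (forall w k, k != g t w -> phi k t.+1 w = phi k t w) ->
  (forall w, phi (g t w) t.+1 w = if z t w then phi1 w else phi0 w) ->
  meas t (fun w => phi1 w - phi0 w) ->
  Expect P (fun w => \sum_k phi k t.+1 w) - Expect P (fun w => \sum_k phi k t w)
  = Expect P (fun w => phi0 w + qreg t w * (phi1 w - phi0 w) - phi (g t w) t w).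
Proof.
move=> hk hg mf; rewrite -ExpectB.
transitivity (Expect P (fun w => phi0 w + (z t w)%:R * (phi1 w - phi0 w) - phi (g t w) t w)).
  apply: (Expect_ext hP0) => w _.
  rewrite (bigD1 (g t w)) // [X in _ - X](bigD1 (g t w)) //=.
  rewrite (eq_bigr (fun k => phi k t w)); last by move=> k; apply: hk.
  rewrite hg; case: (z t w); rewrite /=; ring.
rewrite ExpectB ExpectD zstep // -ExpectD -ExpectB //.
Qed.

Lemma ord_ind (Q : nat -> Prop) : Q 0%N -> (forall t : 'I_N, Q t -> Q t.+1) ->
  forall t, (t <= N)%N -> Q t.
Proof.
move=> Q0 HS; elim=> // t IH ht.
have tN : (t < N)%N by [].
exact: (HS (Ordinal tN) (IH (ltnW ht))).
Qed.

Lemma card_t0 (p : pred 'I_N) : #|[pred i : 'I_N | (i < 0)%N && p i]| = 0%N.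
Proof. by apply: eq_card0 => i; rewrite !inE. Qed.

Lemma cntL_min L k w t : (t <= N)%N -> cntL L k t w = minn (acount g k t w) L.
Proof.
move: t; apply: ord_ind.
  rewrite /cntL /acount !eq_card0 ?min0n // => i; by rewrite !inE.
move=> t IH; rewrite cntL_rec acount_rec.
case: (ltnP (acount g k t w) L) => h.
  have [-> _] := cnt_eq h; rewrite andbT; case: (g t w == k) => /=; lia.
rewrite andbF addn0 IH; lia.
Qed.

Lemma cntL_le L k w t : (t <= N)%N -> (cntL L k t w <= L)%N /\ (cntL L k t w <= acount g k t w)%N.
Proof. move=> h; rewrite cntL_min //; lia. Qed.

Lemma redN_eq k w t : 0 < P w -> (t <= N)%N -> redL Nn k t w = ccount g z k t w.
Proof.
move=> Pw; move: t; apply: ord_ind.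
  rewrite /redL /ccount !eq_card0 // => i; by rewrite !inE.
move=> t IH; rewrite redL_rec ccount_rec IH; congr (_ + _)%N.
case: eqP => //= gk; case: ltnP => //= h.
by rewrite z_exh // gk.
Qed.

Lemma region_eq L k w : (acount g k N w <= L)%N ->
  cntL L k N w = acount g k N w /\ redL L k N w = ccount g z k N w.
Proof.
move=> h; split; apply: eq_card => i; rewrite !inE ltn_ord /=; case: eqP => //= gi.
  by rewrite (leq_trans (acount_lt (ltn_ord i) gi) h).
by rewrite (leq_trans (acount_lt (ltn_ord i) gi) h).
Qed.

Lemma acount_N k w : acount g k N w = #|[pred i : 'I_N | g i w == k]|.
Proof. by apply: eq_card => i; rewrite !inE ltn_ord. Qed.
Lemma ccount_N k w : ccount g z k N w = #|[pred i : 'I_N | (g i w == k) && z i w]|.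
Proof. by apply: eq_card => i; rewrite !inE ltn_ord. Qed.

Lemma sum_acount w : (\sum_k acount g k N w)%N = N.
Proof.
under eq_bigr => k _ do rewrite acount_N -sum1_card big_mkcond /=.
rewrite exchange_big /= -[X in _ = X]card_ord -sum1_card; apply: eq_bigr => i _.
rewrite -big_mkcond /=.
by rewrite (big_pred1 (g i w)) // => k; rewrite unfold_in /= eq_sym.
Qed.

Lemma sum_z w : \sum_i ((z i w)%:R : R) = (\sum_k ccount g z k N w)%:R.
Proof.
rewrite natr_sum; under [RHS]eq_bigr => k _ do rewrite ccount_N -sum1_card natr_sum big_mkcond /=.
rewrite exchange_big /=; apply: eq_bigr => i _.
rewrite -big_mkcond /=.
rewrite (eq_bigl (fun k => (k == g i w) && z i w)); last by move=> k; rewrite inE eq_sym.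
case: (z i w); last by rewrite big_pred0 // => k; rewrite andbF.
by rewrite (big_pred1 (g i w)) // => k; rewrite andbT.
Qed.

Lemma tele_le (F : nat -> R) (d : 'I_N -> R) : (forall t : 'I_N, F t.+1 - F t <= d t) ->
  F N - F 0%N <= \sum_(t < N) d t.
Proof.
move=> H; suff : forall t, (t <= N)%N -> F t - F 0%N <= \sum_(i < N | (i < t)%N) d i.
  by move=> /(_ N (leqnn N)); under eq_bigl => i do rewrite ltn_ord.
apply: ord_ind; first by rewrite subrr big_pred0 // => i.
move=> t IH; rewrite (bigD1 t) //= addrC.
rewrite (eq_bigl (fun i : 'I_N => (i < t)%N)); last first.
  move=> i; rewrite ltnS ltn_neqAle; case: (i <= t)%N; rewrite ?andbT ?andbF //.
have := H t; lra.
Qed.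

Lemma key_k L (t : 'I_N) v w : key t v = key t w ->
  [/\ g t v = g t w, acount g (g t v) t v = acount g (g t w) t w,
      ccount g z (g t v) t v = ccount g z (g t w) t w,
      cntL L (g t v) t v = cntL L (g t w) t w &
      redL L (g t v) t v = redL L (g t w) t w].
Proof.
move=> /key_counts [gt H]; rewrite gt; case: (H (g t w) L) => *; by split.
Qed.

Definition e : R := m%:R / Nn%:R.
Definition WL L k t w : R := (redL L k t w)%:R - e * (cntL L k t w)%:R.

Lemma WL_other L (t : 'I_N) w k : k != g t w -> WL L k t.+1 w = WL L k t w.
Proof. by rewrite /WL cntL_rec redL_rec eq_sym => /negbTE ->; rewrite !addn0. Qed.

Lemma WL_self L (t : 'I_N) w :
  WL L (g t w) t.+1 w = if (acount g (g t w) t w < L)%N then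
     WL L (g t w) t w + (z t w)%:R - e else WL L (g t w) t w.
Proof.
rewrite /WL cntL_rec redL_rec eqxx /=; case: ltnP => h /=; rewrite ?addn0 //.
rewrite !natrD /=; ring.
Qed.

Lemma qreg_eq (t : 'I_N) w : (acount g (g t w) t w < Nn)%N ->
  qreg t w = (m%:R - (ccount g z (g t w) t w)%:R) / (Nn%:R - (acount g (g t w) t w)%:R).
Proof. by rewrite /qreg => ->. Qed.

Lemma alg_q (mm c a NN : R) : NN - a != 0 -> NN != 0 ->
  (mm - c) / (NN - a) - mm / NN = - (c - mm / NN * a) / (NN - a).
Proof. move=> h1 h2; field; by rewrite h1 h2. Qed.

Lemma W2_step L (hL : (L <= Nn)%N) (t : 'I_N) :
  Expect P (fun w => \sum_k (WL L k t.+1 w) ^+ 2) - Expect P (fun w => \sum_k (WL L k t w) ^+ 2)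
  <= Expect P (fun w => if (acount g (g t w) t w < L)%N then qreg t w + e ^+ 2 else 0).
Proof.
pose cond w := (acount g (g t w) t w < L)%N.
pose W w := WL L (g t w) t w.
rewrite (@step_exp t (fun k t w => (WL L k t w) ^+ 2)
   (fun w => if cond w then (W w - e) ^+ 2 else W w ^+ 2)
   (fun w => if cond w then (W w + 1 - e) ^+ 2 else W w ^+ 2)).
- apply: (Expect_le hP0) => w Pw; rewrite /cond /W.
  case: ltnP => h; last by rewrite subrr mulr0 addr0 subrr.
  have hN : (acount g (g t w) t w < Nn)%N by apply: leq_trans hL.
  rewrite qreg_eq //.
  have [cn an] := cnt_eq h.
  rewrite /WL cn an.
  have [h1 h2] := @ha (g t w) t w (ltnW (ltn_ord t)) Pw.
  set c := (ccount g z (g t w) t w); set a := acount g (g t w) t w.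
  have b0 : 0 < Nn%:R - a%:R :> R by rewrite subr_gt0 ltr_nat.
  have N0 : 0 < Nn%:R :> R by rewrite ltr0n; apply: leq_ltn_trans hN.
  have e0 : 0 <= e by rewrite /e divr_ge0.
  set q := (m%:R - c%:R) / (Nn%:R - a%:R).
  have q0 : 0 <= q by apply: divr_ge0; [rewrite subr_ge0 ler_nat | exact: ltW].
  have hq : q - e = - (c%:R - e * a%:R) / (Nn%:R - a%:R).
    by rewrite /q /e alg_q // gt_eqF.
  set W0 := c%:R - e * a%:R.
  have hW : 0 <= W0 ^+ 2 / (Nn%:R - a%:R) by apply: divr_ge0; [exact: sqr_ge0 | exact: ltW].
  have -> : (W0 - e) ^+ 2 + q * ((W0 + 1 - e) ^+ 2 - (W0 - e) ^+ 2) - W0 ^+ 2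
       = 2 * W0 * (q - e) + e ^+ 2 + q - 2 * q * e by ring.
  rewrite hq.
  have -> : 2 * W0 * (- W0 / (Nn%:R - a%:R)) = - 2 * (W0 ^+ 2 / (Nn%:R - a%:R)).
    by ring.
  have : 0 <= q * e by rewrite mulr_ge0.
  lra.
- by move=> w k /(WL_other L) ->.
- move=> w; rewrite WL_self /cond /W; case: ltnP => h //; case: (z t w) => //=; congr (_ ^+ 2); ring.
- move=> v w /(key_k L) [gt ac cc cn rn]; rewrite /cond /W /WL.
  by rewrite ac cn rn.
Qed.

Variable A0 : nat.
Hypothesis hA0 : (A0 < Nn)%N.

Definition phiB k t w : R := WL A0 k t w * Nn%:R / (Nn%:R - (cntL A0 k t w)%:R).

Lemma alg_mart (mm c a NN : R) : NN - a != 0 -> NN - a - 1 != 0 -> NN != 0 ->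
  let W := c - mm / NN * a in
  (W - mm / NN) * NN / (NN - (a + 1)) +
  (mm - c) / (NN - a) * ((W + 1 - mm / NN) * NN / (NN - (a + 1)) - (W - mm / NN) * NN / (NN - (a + 1)))
  - W * NN / (NN - a) = 0.
Proof.
move=> h1 h2 h3 W; rewrite /W.
have h4 : NN - (a + 1) != 0 by rewrite opprD addrA.
field; by rewrite h1 h3 h4.
Qed.

Lemma bulk_step (t : 'I_N) :
  Expect P (fun w => \sum_k phiB k t.+1 w) - Expect P (fun w => \sum_k phiB k t w) = 0.
Proof.
pose cond w := (acount g (g t w) t w < A0)%N.
pose W w := WL A0 (g t w) t w.
pose cn w : R := (cntL A0 (g t w) t w)%:R.
rewrite (@step_exp t phiB
   (fun w => if cond w then (W w - e) * Nn%:R / (Nn%:R - (cn w + 1)) else phiB (g t w) t w)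
   (fun w => if cond w then (W w + 1 - e) * Nn%:R / (Nn%:R - (cn w + 1)) else phiB (g t w) t w)).
- rewrite -(Expect_cst hP1 0); apply: (Expect_ext hP0) => w Pw; rewrite /cond /W /cn.
  case: ltnP => h; last by rewrite subrr mulr0 addr0 subrr.
  have hN : (acount g (g t w) t w < Nn)%N by apply: ltn_trans hA0.
  rewrite qreg_eq //.
  have [cn' an'] := cnt_eq h.
  rewrite /phiB /WL cn' an'.
  set c := (ccount g z (g t w) t w); set a := acount g (g t w) t w.
  have b1 : 1 < Nn%:R - a%:R :> R.
    by rewrite -natrB ?ltr1n; lia.
  rewrite /e alg_mart //; first by rewrite gt_eqF // (lt_trans _ b1).
    by rewrite subr_eq0 gt_eqF.
  by rewrite gt_eqF // ltr0n; apply: leq_ltn_trans hN.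
- move=> w k hk; rewrite /phiB (WL_other A0 hk) cntL_rec.
  by move: hk; rewrite eq_sym => /negbTE ->; rewrite addn0.
- move=> w; rewrite /phiB WL_self cntL_rec eqxx /= /cond /W /cn.
  case: ltnP => h //=; rewrite natrD; case: (z t w) => //=; congr (_ * _ / _); ring.
- move=> v w /(key_k A0) [gt ac cc cnn rn]; rewrite /cond /W /cn /phiB /WL.
  by rewrite ac cnn rn.
Qed.

Definition phiR k t w : R := (ccount g z k t w)%:R - (redL A0 k t w)%:R.

Lemma R_step (t : 'I_N) :
  Expect P (fun w => \sum_k phiR k t.+1 w) - Expect P (fun w => \sum_k phiR k t w)
  = Expect P (fun w => qreg t w * (A0 <= acount g (g t w) t w)%N%:R).
Proof.
rewrite (@step_exp t phiR (fun w => phiR (g t w) t w)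
  (fun w => phiR (g t w) t w + (A0 <= acount g (g t w) t w)%N%:R)).
- apply: (Expect_ext hP0) => w _; ring.
- move=> w k hk; rewrite /phiR ccount_rec redL_rec.
  by move: hk; rewrite eq_sym => /negbTE ->; rewrite !addn0.
- move=> w; rewrite /phiR ccount_rec redL_rec eqxx /=.
  case: (z t w); rewrite /= ?andbT ?andbF ?addn0 ?addr0 //.
  rewrite !natrD; case: leqP => _ /=; ring.
- move=> v w /(key_k A0) [gt ac cc cnn rn].
  have E u : phiR (g t u) t u + (A0 <= acount g (g t u) t u)%:R - phiR (g t u) t u
     = (A0 <= acount g (g t u) t u)%:R by ring.
  by rewrite !E ac.
Qed.

Lemma counts0 L k w : [/\ acount g k 0 w = 0%N, ccount g z k 0 w = 0%N,
  cntL L k 0 w = 0%N & redL L k 0 w = 0%N].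
Proof. by split; apply: eq_card0 => i; rewrite !inE. Qed.

Lemma tele_eq (F : nat -> R) (d : 'I_N -> R) : (forall t : 'I_N, F t.+1 - F t = d t) ->
  F N - F 0%N = \sum_(t < N) d t.
Proof.
move=> H; apply/eqP; rewrite eq_le tele_le; last by move=> t; rewrite H.
have := @tele_le (fun t => - F t) (fun t => - d t).
rewrite sumrN => /(_ _) h; have : - F N - - F 0%N <= - \sum_(t < N) d t.
  by apply: h => t; rewrite -H; lra.
lra.
Qed.

Lemma T1 : Expect P (fun w => \sum_k phiB k N w) = 0.
Proof.
have := @tele_eq (fun t => Expect P (fun w => \sum_k phiB k t w)) (fun _ => 0).
rewrite big1 // => /(_ bulk_step).
have -> : Expect P (fun w => \sum_k phiB k 0 w) = 0.
  rewrite /Expect big1 // => w _; rewrite big1 ?mulr0 // => k _.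
  by rewrite /phiB /WL; case: (counts0 A0 k w) => _ _ -> ->; rewrite /= !mulr0 !subr0 !mul0r.
by rewrite subr0.
Qed.

Lemma T2 L : (L <= Nn)%N -> Expect P (fun w => \sum_k (WL L k N w) ^+ 2)
  <= \sum_(t < N) Expect P (fun w => if (acount g (g t w) t w < L)%N then qreg t w + e ^+ 2 else 0).
Proof.
move=> hL.
have := @tele_le (fun t => Expect P (fun w => \sum_k (WL L k t w) ^+ 2))
  (fun t => Expect P (fun w => if (acount g (g t w) t w < L)%N then qreg t w + e ^+ 2 else 0)).
have -> : Expect P (fun w => \sum_k (WL L k 0 w) ^+ 2) = 0.
  rewrite /Expect big1 // => w _; rewrite big1 ?mulr0 // => k _.
  by rewrite /WL; case: (counts0 L k w) => _ _ -> ->; rewrite /= !mulr0 subr0 expr2 mulr0.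
by rewrite subr0; apply => t; apply: W2_step.
Qed.

Lemma T3 : \sum_(t < N) Expect P (fun w => qreg t w * (A0 <= acount g (g t w) t w)%N%:R)
  = Expect P (fun w => \sum_k phiR k N w).
Proof.
have := @tele_eq (fun t => Expect P (fun w => \sum_k phiR k t w))
  (fun t => Expect P (fun w => qreg t w * (A0 <= acount g (g t w) t w)%N%:R)).
have -> : Expect P (fun w => \sum_k phiR k 0 w) = 0.
  rewrite /Expect big1 // => w _; rewrite big1 ?mulr0 // => k _.
  by rewrite /phiR; case: (counts0 A0 k w) => _ -> _ ->; rewrite subrr.
by rewrite subr0 => -> //; apply: R_step.
Qed.


Hypothesis hA3 : (N < 3 * A0)%N.

Lemma cnt2 w : (\sum_k (A0 < acount g k N w)%N <= 2)%N.
Proof.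
have h : ((\sum_k (A0 < acount g k N w)%N) * A0 <= N)%N.
  rewrite big_distrl /=; apply: (@leq_trans (\sum_k acount g k N w)); last by rewrite sum_acount.
  apply: leq_sum => k _.
  by case: ltnP => h /=; [rewrite mul1n ltnW | rewrite mul0n].
nia.
Qed.

Lemma exh_count w (hYN : (2 * Yn <= N)%N) :
  (\sum_k (acount g k N w - minn (acount g k N w) Nn) <= Yn)%N.
Proof.
have hs := sum_acount w.
case: (pickP (fun k => Nn < acount g k N w)%N) => [k0 hk0|none]; last first.
  rewrite big1 // => k _; have := none k; rewrite /= => /negbT; rewrite -leqNgt; lia.
rewrite (bigD1 k0) //= big1 => [|k hk].
  have : (acount g k0 N w <= N)%N.
    apply: (@leq_trans (\sum_k acount g k N w)); last by rewrite hs.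
    by rewrite (bigD1 k0) //= leq_addr.
  rewrite /Nn; lia.
have : (acount g k0 N w + acount g k N w <= N)%N.
  apply: (@leq_trans (\sum_k acount g k N w)); last by rewrite hs.
  by rewrite (bigD1 k0) //= leq_add2l (bigD1 k) //= leq_addr.
move: hk0; rewrite /Nn; lia.
Qed.

Variable s : R.
Hypothesis hs2 : s ^+ 2 = m%:R.
Hypothesis hs1 : 1 <= s.
Hypothesis hY : Yn%:R <= s * n%:R / 6.
Hypothesis hnb : 1200 * s <= n%:R.
Hypothesis hAr : 3 * A0%:R <= N%:R + 3 :> R.

Lemma f_m : 1 <= m%:R :> R.
Proof. rewrite -hs2 expr2; have := hs1; nra. Qed.
Lemma f_sm : s <= m%:R.
Proof. rewrite -hs2 expr2; have := hs1; nra. Qed.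
Lemma f_n : 1200 <= n%:R :> R.
Proof. have := hnb; have := hs1; lra. Qed.
Lemma f_N : N%:R = m%:R * n%:R :> R.
Proof. by rewrite natrM. Qed.
Lemma f_Nn : Nn%:R = N%:R - Yn%:R :> R.
Proof. by rewrite /Nn natrB. Qed.
Lemma f_Y : Yn%:R * 6 <= s * n%:R.
Proof. by have := hY; rewrite ler_pdivlMr. Qed.
Lemma f_N9 : 1200 <= N%:R :> R.
Proof. have := f_m; have := f_n; rewrite f_N; nra. Qed.
Lemma f_Nn2 : 5 * N%:R <= 6 * Nn%:R :> R.
Proof. have := f_Y; have := f_sm; have := f_n; rewrite f_Nn f_N; nra. Qed.
Lemma f_B : N%:R <= 3 * (Nn%:R - A0%:R) :> R.
Proof. have := f_Nn2; have := f_N9; have := hAr; lra. Qed.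
Lemma f_Nn0 : 0 < Nn%:R :> R.
Proof. have := f_Nn2; have := f_N9; lra. Qed.
Lemma f_e : e * Nn%:R = m%:R.
Proof. by rewrite /e divfK // gt_eqF // f_Nn0. Qed.
Lemma f_e0 : 0 <= e.
Proof. by rewrite /e divr_ge0. Qed.
Lemma f_e2 : e ^+ 2 * N%:R <= m%:R.
Proof.
have h1 := f_e; have h2 := f_e0; have h3 := f_Nn2; have h4 := f_m; have h5 := f_n.
have h6 : m%:R * 6 <= Nn%:R * 5 :> R by move: h3; rewrite f_N; nra.
have h7 : e * 6 <= 5 by nra.
nra.
Qed.
Lemma f_eY : e * Yn%:R <= s / 5.
Proof.
have h1 := f_e; have h2 := f_e0; have h3 := f_Nn2; have h4 := f_Y; have h5 := f_n.
rewrite f_N in h3.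
have h9 := ler_wpM2l h2 h3.
have h6' : m%:R * (e * (5 * n%:R)) <= m%:R * 6.
  have -> : m%:R * (e * (5 * n%:R)) = e * (5 * (m%:R * n%:R)) by ring.
  have -> : m%:R * 6 = e * (6 * Nn%:R) :> R by rewrite -h1; ring.
  exact: h9.
have h0 := f_m.
have h6 : e * (5 * n%:R) <= 6 by rewrite ler_pM2l in h6'; [exact: h6' | lra].
have h7 : e * (Yn%:R * 6) <= e * (s * n%:R) by exact: ler_wpM2l.
have hs := hs1.
have h8 : s * (e * (5 * n%:R)) <= s * 6 by apply: ler_wpM2l => //; lra.
rewrite ler_pdivlMr //; lra.
Qed.

Lemma sum_cst (c : R) : \sum_(t < N) c = c * N%:R.
Proof. by rewrite sumr_const card_ord mulr_natr. Qed.

Lemma f_N0 : 0 < N%:R :> R.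
Proof. have := f_N9; lra. Qed.

Definition u : R := m%:R / N%:R.
Lemma f_u : u * N%:R = m%:R.
Proof. by rewrite /u divfK // gt_eqF // f_N0. Qed.

Lemma f_sumu (c : R) : \sum_(t < N) (c * u) = c * m%:R.
Proof. by rewrite sum_cst -mulrA f_u. Qed.

Lemma bulk_pt (t : 'I_N) w : 0 < P w ->
  (if (acount g (g t w) t w < A0)%N then qreg t w + e ^+ 2 else 0) <= 4 * u.
Proof.
move=> Pw; have u0 : 0 <= u by rewrite /u divr_ge0.
case: ltnP => h; last by rewrite mulr_ge0.
have hN : (acount g (g t w) t w < Nn)%N by apply: ltn_trans hA0.
rewrite qreg_eq //.
have [h1 h2] := @ha (g t w) t w (ltnW (ltn_ord t)) Pw.
set c := ccount g z (g t w) t w; set a := acount g (g t w) t w.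
set q := (m%:R - c%:R) / (Nn%:R - a%:R).
have hB := f_B; have hN0 := f_N0.
have ha' : a%:R <= A0%:R :> R by rewrite ler_nat ltnW.
have bpos : 0 < Nn%:R - a%:R :> R by lra.
have q0 : 0 <= q by apply: divr_ge0; [rewrite subr_ge0 ler_nat | exact: ltW].
have qd : q * (Nn%:R - a%:R) = m%:R - c%:R by rewrite /q divfK // gt_eqF.
have hq : q * (N%:R / 3) <= m%:R.
  apply: (divle _ _ q0 qd); first by lra.
    by lra.
  by rewrite lerBlDr lerDl.
have he := f_e2.
rewrite -(@ler_pM2r _ N%:R) //.
have -> : 4 * u * N%:R = 4 * m%:R by rewrite -mulrA f_u.
rewrite mulrDl.
lra.
Qed.

Lemma EWA0 : Expect P (fun w => \sum_k (WL A0 k N w) ^+ 2) <= 4 * m%:R.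
Proof.
apply: le_trans (T2 (ltnW hA0)) _; rewrite -f_sumu; apply: ler_sum => t _.
rewrite -[4 * u](Expect_cst hP1); apply: (Expect_le hP0) => w Pw; exact: bulk_pt.
Qed.

Lemma phiR_pt w : 0 < P w -> \sum_k phiR k N w <= 2 * m%:R.
Proof.
move=> Pw.
apply: (@le_trans _ _ (\sum_k (A0 < acount g k N w)%N%:R * m%:R)).
  apply: ler_sum => k _; rewrite /phiR.
  case: ltnP => h; last first.
    by have [_ ->] := region_eq h; rewrite subrr mul0r.
  have [_ hc'] := @ha k N w (leqnn N) Pw.
  rewrite mul1r; have : 0 <= (redL A0 k N w)%:R :> R by [].
  have : (ccount g z k N w)%:R <= m%:R :> R by rewrite ler_nat.
  lra.
rewrite -mulr_suml -natr_sum ler_pM2r ?ler_nat ?cnt2 //.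
have := f_m; lra.
Qed.

Lemma EWN : Expect P (fun w => \sum_k (WL Nn k N w) ^+ 2) <= 7 * m%:R.
Proof.
apply: le_trans (T2 (leqnn Nn)) _.
apply: (@le_trans _ _ (\sum_(t < N) (Expect P (fun w =>
   (if (acount g (g t w) t w < A0)%N then qreg t w + e ^+ 2 else 0)) +
   Expect P (fun w => qreg t w * (A0 <= acount g (g t w) t w)%N%:R) + Expect P (fun _ => e ^+ 2)))).
  apply: ler_sum => t _; rewrite -!ExpectD.
  apply: (Expect_le hP0) => w Pw.
  have e2 : 0 <= e ^+ 2 by apply: sqr_ge0.
  case: (ltnP _ Nn) => h1; case: (ltnP _ A0) => h2 //=; rewrite ?mulr1 ?mulr0;
  first [lra | (rewrite /qreg ltnNge h1 /=; lra) | (exfalso; lia)].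
rewrite !big_split /= T3 sum_cst.
have h1 : \sum_(t < N) Expect P (fun w => if (acount g (g t w) t w < A0)%N then qreg t w + e ^+ 2 else 0) <= 4 * m%:R.
  rewrite -f_sumu; apply: ler_sum => t _.
  rewrite -[4 * u](Expect_cst hP1); apply: (Expect_le hP0) => w Pw; exact: bulk_pt.
have h2 : Expect P (fun w => \sum_k phiR k N w) <= 2 * m%:R.
  rewrite -[2 * m%:R](Expect_cst hP1); apply: (Expect_le hP0) => w Pw; exact: phiR_pt.
have h3 := f_e2.
rewrite (Expect_cst hP1).
lra.
Qed.

Lemma sum_r2 w : \sum_k ((cntL A0 k N w)%:R / (Nn%:R - (cntL A0 k N w)%:R)) ^+ 2 <= 4 :> R.
Proof.
have hB := f_B; have hN9 := f_N9; have hA := hAr.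
pose c k : R := (cntL A0 k N w)%:R.
have hk k : ((c k) / (Nn%:R - c k)) ^+ 2 * N%:R ^+ 2 <= 9 * A0%:R * c k.
  have [hc1 hc2] := @cntL_le A0 k w N (leqnn N).
  have c0 : 0 <= c k by [].
  have cA : c k <= A0%:R by rewrite ler_nat.
  have bpos : 0 < Nn%:R - c k by lra.
  set r := c k / (Nn%:R - c k).
  have r0 : 0 <= r by apply: divr_ge0 => //; exact: ltW.
  have rd : r * (Nn%:R - c k) = c k by rewrite /r divfK // gt_eqF.
  have h : r * (N%:R / 3) <= c k by apply: (divle _ _ r0 rd) => //; lra.
  have h' : r * N%:R <= 3 * c k by lra.
  have h'' : (r * N%:R) ^+ 2 <= (3 * c k) ^+ 2.
    by rewrite ler_sqr ?nnegrE //; [exact: mulr_ge0 | lra].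
  have : (3 * c k) ^+ 2 <= 9 * A0%:R * c k by nra.
  rewrite exprMn in h''; lra.
have hs : \sum_k c k <= N%:R.
  rewrite /c -natr_sum ler_nat -{2}(sum_acount w); apply: leq_sum => k _.
  by have [_ ->] := @cntL_le A0 k w N (leqnn N).
have : (\sum_k ((c k) / (Nn%:R - c k)) ^+ 2) * N%:R ^+ 2 <= 4 * N%:R ^+ 2.
  rewrite mulr_suml; apply: le_trans (ler_sum _ (fun k _ => hk k)) _.
  rewrite -mulr_sumr; have h0 : 0 <= 9 * A0%:R :> R by rewrite mulr_ge0.
  have := ler_wpM2l h0 hs.
  have : 9 * A0%:R <= 4 * N%:R :> R by lra.
  nra.
rewrite ler_pM2r //; exact: exprn_gt0 f_N0.
Qed.

Lemma f_s0 : 0 < s.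
Proof. have := hs1; lra. Qed.

Lemma f_ms (c : R) : (2 * s)^-1 * (c * m%:R) = c / 2 * s.
Proof. rewrite -hs2; field; rewrite gt_eqF //; exact: f_s0. Qed.

Lemma Ebulk : `|Expect P (fun w => \sum_k WL A0 k N w)| <= 4 * s.
Proof.
have s0 := f_s0.
have -> : Expect P (fun w => \sum_k WL A0 k N w) =
   Expect P (fun w => \sum_k WL A0 k N w - \sum_k phiB k N w) by rewrite ExpectB T1 subr0.
apply: le_trans (Expect_abs hP0 _) _.
apply: (@le_trans _ _ (Expect P (fun w => (2 * s)^-1 * \sum_k (WL A0 k N w) ^+ 2 + 2 * s))).
  apply: (Expect_le hP0) => w _.
  have -> : \sum_k WL A0 k N w - \sum_k phiB k N w =
     - \sum_k (WL A0 k N w * ((cntL A0 k N w)%:R / (Nn%:R - (cntL A0 k N w)%:R))).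
    rewrite -sumrB -sumrN; apply: eq_bigr => k _; rewrite /phiB.
    have [hc1 _] := @cntL_le A0 k w N (leqnn N).
    have : (cntL A0 k N w)%:R < Nn%:R :> R by rewrite ltr_nat; apply: leq_ltn_trans hA0.
    move=> h; field; by rewrite subr_eq0 gt_eqF.
  rewrite normrN; apply: le_trans (ler_norm_sum _ _ _) _.
  apply: le_trans (ler_sum _ (fun k _ => amgm _ _ s0)) _.
  rewrite big_split /=.
  have -> : \sum_k WL A0 k N w ^+ 2 / (2 * s) = (2 * s)^-1 * \sum_k (WL A0 k N w) ^+ 2.
    by rewrite mulr_sumr; apply: eq_bigr => k _; rewrite mulrC.
  have -> : \sum_k s * ((cntL A0 k N w)%:R / (Nn%:R - (cntL A0 k N w)%:R)) ^+ 2 / 2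
     = s / 2 * \sum_k ((cntL A0 k N w)%:R / (Nn%:R - (cntL A0 k N w)%:R)) ^+ 2.
    by rewrite mulr_sumr; apply: eq_bigr => k _; ring.
  have := sum_r2 w; set S2 := \sum_k _ ^+ 2.
  move=> h; have : s / 2 * S2 <= s / 2 * 4 by rewrite ler_pM2l // divr_gt0.
  lra.
rewrite ExpectD (Expect_cst hP1 (2 * s)) ExpectZ.
have := EWA0; move=> h.
have : (2 * s)^-1 * Expect P (fun w => \sum_k WL A0 k N w ^+ 2) <= (2 * s)^-1 * (4 * m%:R).
  by rewrite ler_pM2l // invr_gt0 mulr_gt0.
rewrite f_ms; lra.
Qed.

Lemma Eregion : `|Expect P (fun w => \sum_k (WL Nn k N w - WL A0 k N w))| <= 8 * s.
Proof.
have s0 := f_s0.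
apply: le_trans (Expect_abs hP0 _) _.
apply: (@le_trans _ _ (Expect P (fun w => (2 * s)^-1 * (\sum_k (WL Nn k N w) ^+ 2 + \sum_k (WL A0 k N w) ^+ 2) + 2 * s))).
  apply: (Expect_le hP0) => w _.
  apply: le_trans (ler_norm_sum _ _ _) _.
  apply: (@le_trans _ _ (\sum_k ((2 * s)^-1 * ((WL Nn k N w) ^+ 2 + (WL A0 k N w) ^+ 2)
      + (A0 < acount g k N w)%N%:R * s))).
    apply: ler_sum => k _.
    have hx : 0 <= (2 * s)^-1 * (WL Nn k N w ^+ 2 + WL A0 k N w ^+ 2).
      by rewrite mulr_ge0 // ?invr_ge0 ?mulr_ge0 ?addr_ge0 ?sqr_ge0 // ltW.
    case: ltnP => h; last first.
      have [c1 r1] := region_eq h.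
      have [c2 r2] := @region_eq Nn k w (leq_trans h (ltnW hA0)).
      rewrite mul0r addr0; suff -> : WL Nn k N w - WL A0 k N w = 0 by rewrite normr0.
      by rewrite /WL c1 r1 c2 r2 subrr.
    rewrite mul1r; apply: le_trans (ler_normB _ _) _.
    have := amgm1 (WL Nn k N w) s0; have := amgm1 (WL A0 k N w) s0.
    have -> : (2 * s)^-1 * (WL Nn k N w ^+ 2 + WL A0 k N w ^+ 2)
      = WL Nn k N w ^+ 2 / (2 * s) + WL A0 k N w ^+ 2 / (2 * s) by ring.
    lra.
  rewrite big_split /= -mulr_sumr -mulr_suml big_split /=.
  have := cnt2 w; rewrite -(ler_nat R) natr_sum => hcc.
  have : (\sum_k (A0 < acount g k N w)%N%:R) * s <= 2 * s by rewrite ler_pM2r.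
  lra.
rewrite ExpectD (Expect_cst hP1 (2 * s)) ExpectZ ExpectD.
have := EWA0; have := EWN; move=> h1 h2.
have : (2 * s)^-1 * (Expect P (fun w => \sum_k WL Nn k N w ^+ 2) + Expect P (fun w => \sum_k WL A0 k N w ^+ 2))
   <= (2 * s)^-1 * (11 * m%:R).
  by rewrite ler_pM2l ?invr_gt0 ?mulr_gt0 //; lra.
rewrite f_ms; lra.
Qed.

Lemma f_YN : (2 * Yn <= N)%N.
Proof.
rewrite -(ler_nat R) mul2n -addnn natrD; have := f_Y; have := f_sm; have := f_n; rewrite f_N => h1 h2 h3.
have : s * n%:R <= m%:R * n%:R by rewrite ler_pM2r //; lra.
have : 0 <= m%:R * n%:R :> R by rewrite mulr_ge0.
lra.
Qed.

Lemma Eexh w : 0 < P w ->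
  `|\sum_k ((ccount g z k N w)%:R - e * (acount g k N w)%:R - WL Nn k N w)| <= e * Yn%:R.
Proof.
move=> Pw.
have -> : \sum_k ((ccount g z k N w)%:R - e * (acount g k N w)%:R - WL Nn k N w)
   = - (e * (\sum_k (acount g k N w - minn (acount g k N w) Nn))%:R).
  rewrite natr_sum mulr_sumr -sumrN; apply: eq_bigr => k _.
  rewrite /WL redN_eq // cntL_min // natrB ?geq_minl //; ring.
rewrite normrN normrM ger0_norm ?f_e0 // ger0_norm //.
by rewrite ler_wpM2l ?f_e0 // ler_nat exh_count // f_YN.
Qed.

Lemma final : `|\sum_i Expect P (fun w => (z i w)%:R) - m%:R| <= 300 * s.
Proof.
rewrite -Expect_sum.
have -> : Expect P (fun w => \sum_i (z i w)%:R) = e * N%:R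
   + Expect P (fun w => \sum_k WL A0 k N w)
   + Expect P (fun w => \sum_k (WL Nn k N w - WL A0 k N w))
   + Expect P (fun w => \sum_k ((ccount g z k N w)%:R - e * (acount g k N w)%:R - WL Nn k N w)).
  rewrite -(Expect_cst hP1 (e * N%:R)) -!ExpectD.
  apply: (Expect_ext hP0) => w _.
  have hsa : (N%:R : R) = \sum_k (acount g k N w)%:R by rewrite -natr_sum sum_acount.
  rewrite sum_z natr_sum [in e * _]hsa mulr_sumr -!big_split /=.
  by apply: eq_bigr => k _; ring.
have h1 := Ebulk; have h2 := Eregion.
have h3 : `|Expect P (fun w => \sum_k ((ccount g z k N w)%:R - e * (acount g k N w)%:R - WL Nn k N w))| <= e * Yn%:R.
  apply: le_trans (Expect_abs hP0 _) _.
  rewrite -[e * Yn%:R](Expect_cst hP1); apply: (Expect_le hP0) => w Pw; exact: Eexh.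
have h4 : e * N%:R - m%:R = e * Yn%:R by rewrite -f_e f_Nn; ring.
have h5 := f_eY; have s0 := f_s0.
set A := Expect P _ in h1; set B := Expect P _ in h2; set C := Expect P _ in h3.
have : `|e * N%:R + A + B + C - m%:R| <= `|e * N%:R - m%:R| + `|A| + `|B| + `|C|.
  have -> : e * N%:R + A + B + C - m%:R = (e * N%:R - m%:R) + A + B + C by ring.
  apply: le_trans (ler_normD _ _) _; rewrite lerD2r.
  apply: le_trans (ler_normD _ _) _; rewrite lerD2r.
  exact: ler_normD.
have h6 : `|e * N%:R - m%:R| = e * Yn%:R.
  by rewrite h4 ger0_norm //; apply: mulr_ge0; [exact: f_e0 | by []].
rewrite h6; lra.
Qed.
End Main.

Unset Implicit Arguments. Set Strict Implicit.

Theorem lemma2p5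
  (R : realType) (m n : nat)
  (hm : (0 < m)%N) (hn : (0 < n)%N)
  (hnm : 1200 * Num.sqrt (m%:R : R) <= n%:R)
  (* probability space *)
  (Omega : finType) (P : Omega -> R) (hP : is_prob_space P)
  (* the uniformly shuffled deck *)
  (deck : Omega -> (m * n).-tuple 'I_n)
  (hdeck : forall s, Prob P (fun w => deck w == s)
                     = (s \in arrangements m n)%:R / #|arrangements m n|%:R)
  (* the guesser's private randomness, independent of the deck *)
  (S : finType) (xi : Omega -> S)
  (hxi : forall s x, Prob P (fun w => (deck w == s) && (xi w == x))
                     = Prob P (fun w => deck w == s) * Prob P (fun w => xi w == x))
  (* the fixed strategy, guesses g and hit indicators y *)
  (G : 'I_(m * n) -> S -> seq bool -> 'I_n)
  (g : 'I_(m * n) -> Omega -> 'I_n) (y : 'I_(m * n) -> Omega -> bool)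
  (hg : forall (t : 'I_(m * n)) w, g t w = G t (xi w) (upto y t w))
  (hy : forall (t : 'I_(m * n)) w, y t w = (tnth (deck w) t == g t w))
  (* the coupled vector z *)
  (z : 'I_(m * n) -> Omega -> bool)
  (ha : forall (k : 'I_n) (t : nat) w, (t <= m * n)%N -> 0 < P w ->
          ((m%:R : R) - Num.max ((m * n)%:R - (acount g k t w)%:R - (Yval R m n)%:~R) 0
             <= (ccount g z k t w)%:R)
          /\ (ccount g z k t w)%:R <= (m%:R : R))
  (hb : forall (t : 'I_(m * n)) w,
          0 < Prob P (fun v => (upto g t.+1 v, upto y t.+1 v)
                               == (upto g t.+1 w, upto y t.+1 w)) ->
          forall (b : 'I_(m * n) -> bool) (V : seq 'I_n * seq bool),
            condP P (fun v => [forall j : 'I_(m * n), (j <= t)%N ==> (z j v == b j)]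
                               && ((upto g (m * n) v, upto y (m * n) v) == V))
                  (fun v => (upto g t.+1 v, upto y t.+1 v)) w
            = (\prod_(j < m * n | (j <= t)%N)
                 condP P (fun v => z j v == b j)
                       (fun v => (upto g t.+1 v, upto y t.+1 v)) w)
              * condP P (fun v => (upto g (m * n) v, upto y (m * n) v) == V)
                      (fun v => (upto g t.+1 v, upto y t.+1 v)) w)
  (hc : forall (t : 'I_(m * n)) w, 0 < P w ->
          ((acount g (g t w) t w)%:R < (m * n)%:R - (Yval R m n)%:~R :> R) ->
          condE P (fun v => (z t v)%:R) (fun v => (upto g t.+1 v, upto z t v)) w
          = (m%:R - (ccount g z (g t w) t w)%:R)
            / ((m * n)%:R - (acount g (g t w) t w)%:R - (Yval R m n)%:~R))
  (hd : forall (t : 'I_(m * n)) w, 0 < P w ->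
          condE P (fun v => (y t v)%:R) (fun v => (upto g t.+1 v, upto y t v)) w
            <= condE P (fun v => (z t v)%:R) (fun v => (upto g t.+1 v, upto z t v)) w ->
          y t w ==> z t w) :
  `| \sum_(i < m * n) Expect P (fun w => (z i w)%:R) - m%:R | <= 300 * Num.sqrt (m%:R : R).
Proof.
case: hP => hP0 hP1.
set s := Num.sqrt (m%:R : R) in hnm *.
have hs2 : s ^+ 2 = m%:R by rewrite sqr_sqrtr.
have hs1 : 1 <= s by rewrite -sqrtr1 ler_sqrt // ler1n.
have hY0 : 0 <= Yval R m n.
  rewrite /Yval floor_ge0 divr_ge0 // mulr_ge0 //; exact: sqrtr_ge0.
have [Yn hYz] : exists Yn : nat, Yval R m n = Yn%:Z.
  by case: (Yval R m n) hY0 => [k _|k] //; exists k.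
have hYR : (Yval R m n)%:~R = Yn%:R :> R by rewrite hYz.
have hY : Yn%:R <= s * n%:R / 6.
  by rewrite -hYR; apply: floor_le.
clearbody s.
have hsm : s <= m%:R by rewrite -hs2 expr2 ler_peMl // (le_trans ler01 hs1).
have hnn : 1200 <= n%:R :> R.
  by have := hnm; have := hs1; lra.
have hN : (1200 <= m * n)%N.
  rewrite -(ler_nat R) natrM; have : 1 <= m%:R :> R by rewrite ler1n.
  have : (1200 : R) = 1200%:R by []. nra.
have hY6 : (6 * Yn <= m * n)%N.
  rewrite -(ler_nat R) !natrM.
  have : s * n%:R <= m%:R * n%:R by rewrite ler_pM2r // ltr0n.
  have : (6 : R) = 6%:R by []. lra.
have hYn : (Yn <= m * n)%N by lia.
pose A0 := ((m * n) %/ 3).+1.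
have hA0 : (A0 < Nn m n Yn)%N by rewrite /A0 /Nn; lia.
have hA3 : (m * n < 3 * A0)%N by rewrite /A0; lia.
have hAr : (3 * A0%:R : R) <= ((m * n)%:R + 3 : R).
  have : (3 * A0 <= m * n + 3)%N by rewrite /A0; lia.
  rewrite -(ler_nat R) natrM natrD => h; exact: h.
have hNnR : (Nn m n Yn)%:R = (m * n)%:R - Yn%:R :> R by rewrite /Nn natrB.
apply: (@final R m n Omega P hP0 hP1 g z Yn hYn _ _ A0 hA0 hA3 s hs2 hs1 hY hnm hAr).
- move=> k t w ht Pw; have [h1 h2] := ha k t w ht Pw; split; last by rewrite -(ler_nat R).
  rewrite hYR in h1.
  have hM : Num.max ((m * n)%:R - (acount g k t w)%:R - Yn%:R) 0 = ((Nn m n Yn - acount g k t w)%N)%:R :> R.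
    have hx : (m * n)%:R - (acount g k t w)%:R - Yn%:R = (Nn m n Yn)%:R - (acount g k t w)%:R :> R.
      by rewrite hNnR; ring.
    rewrite hx; case: (leqP (acount g k t w) (Nn m n Yn)) => ha'.
      by rewrite -natrB //; apply/max_idPl; exact: ler0n.
    rewrite (_ : (Nn m n Yn - acount g k t w)%N = 0%N); last by apply/eqP; rewrite subn_eq0 ltnW.
    apply/max_idPr; rewrite subr_le0 ler_nat; exact: ltnW.
  rewrite hM lerBlDr -natrD ler_nat in h1.
  exact: h1.
- move=> t w Pw h.
  have h' : (acount g (g t w) t w)%:R < (m * n)%:R - (Yval R m n)%:~R :> R.
    by rewrite hYR -hNnR ltr_nat.
  have := hc t w Pw h'; rewrite hYR => ->.
  by rewrite hNnR; congr (_ / _); ring.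
Qed.
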